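(* Let $r>s\ge1$ be integers and let $n\ge1$ be an integer. Then the $(r,s)$-Bell number $\phi_n^{(r,s)}$ satisfies \[ \phi_n^{(r,s)}=\frac{(r-s)^{sn}}{e}\sum_{k=0}^{\infty}\frac{1}{k!}\prod_{l=1}^{s}\frac{\Gamma\!\big(n+\frac{k-l+1}{r-s}\big)}{\Gamma\!\big(\frac{k-l+1}{r-s}\big)}. \]
   Context: Let $D=\frac{d}{dx}$ and let $x$ denote the operator of multiplication by $x$. For integers $r\ge s\ge1$ and $n\ge1$, the generalized $(r,s)$-Stirling numbers of the second kind $S_{r,s}(n,k)$ (of Blasiak–Penson–Solomon) are defined by the normal ordering identity \[ (x^{r}D^{s})^{n}=x^{n(r-s)}\sum_{k=s}^{ns}S_{r,s}(n,k)\,x^{k}D^{k}, \] and the $(r,s)$-Bell numbers are $\phi_n^{(r,s)}=\sum_{k=s}^{ns}S_{r,s}(n,k)$. Here the ratio $\Gamma(n+a)/\Gamma(a)$ stands for the rising factorial $a(a+1)\cdots(a+n-1)$ (which is its value, or limiting value, also when $a$ is a nonpositive integer). *)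

(* Defs.v *)
From HB Require Import structures.
From mathcomp Require Import all_boot all_order all_algebra.
From mathcomp Require Import all_classical all_reals all_analysis.
Set Implicit Arguments. Unset Strict Implicit. Unset Printing Implicit Defensive.
Import Order.TTheory GRing.Theory Num.Theory.
Local Open Scope ring_scope.

Definition xrDs {R : realType} (r s : nat) (p : {poly R}) : {poly R} :=
  'X^r * p^`(s).

Definition is_rs_stirling {R : realType} (r s : nat) (S : nat -> nat -> R) :=
  forall (n : nat), (1 <= n)%N -> forall p : {poly R},
    iter n (xrDs r s) p =
    'X^(n * (r - s)) * \sum_(s <= k < (n * s).+1) S n k *: ('X^k * p^`(k)).

Definition rs_bell {R : realType} (s : nat) (S : nat -> nat -> R) (n : nat) : R :=
  \sum_(s <= k < (n * s).+1) S n k.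

(* Rising factorial a (a+1) ... (a+n-1) = Gamma(n+a)/Gamma(a). *)
Definition rising {R : realType} (a : R) (n : nat) : R := \prod_(i < n) (a + i%:R).

Definition bell_term {R : realType} (r s n : nat) (k : nat) : R :=
  (k`!%:R)^-1 * \prod_(1 <= l < s.+1)
     rising ((k%:R - l%:R + 1) / (r - s)%:R) n.

(* Main.v *)
Require Import Defs.
From HB Require Import structures.
From mathcomp Require Import all_boot all_order all_algebra.
From mathcomp Require Import all_classical all_reals all_analysis.
From mathcomp Require Import zify ring lra.
Import Order.TTheory GRing.Theory Num.Theory numFieldNormedType.Exports.
Local Open Scope ring_scope.

Section A.
Variable R : realType.

Lemma xrDs_Xn (r s k : nat) : (s < r)%N ->
  xrDs (R:=R) r s 'X^k = (k ^_ s)%:R *: 'X^(k + (r - s)).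
Proof.
move=> sr; rewrite /xrDs derivnXn mulrnAr -exprD -scaler_nat.
have [ks|ks] := leqP s k.
  by congr (_ *: 'X^_); lia.
by rewrite ffact_small // !scale0r.
Qed.

Lemma xrDsZ (r s : nat) (c : R) p : xrDs r s (c *: p) = c *: xrDs r s p.
Proof. by rewrite /xrDs derivnZ scalerAr. Qed.

Lemma iter_Xn (r s k n : nat) : (s < r)%N ->
  iter n (xrDs (R:=R) r s) 'X^k =
  (\prod_(j < n) (k + j * (r - s)) ^_ s)%:R *: 'X^(k + n * (r - s)).
Proof.
move=> sr; elim: n => [|n IH].
  by rewrite big_ord0 scale1r mul0n addn0.
rewrite iterS IH xrDsZ xrDs_Xn // scalerA big_ord_recr /= natrM mulrC.
by congr (_ *: 'X^_); lia.
Qed.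

Lemma stirling_eq (r s n : nat) (S : nat -> nat -> R) k :
  (s < r)%N -> (1 <= n)%N -> is_rs_stirling r s S ->
  (\prod_(j < n) (k + j * (r - s)) ^_ s)%:R =
  \sum_(s <= j < (n * s).+1) S n j * (k ^_ j)%:R.
Proof.
move=> sr n1 H; have := H n n1 'X^k; rewrite iter_Xn //.
have -> : \sum_(s <= j < (n * s).+1) S n j *: ('X^j * ('X^k : {poly R})^`(j))
   = (\sum_(s <= j < (n * s).+1) S n j * (k ^_ j)%:R) *: 'X^k.
  rewrite scaler_suml; apply: eq_bigr => j _.
  rewrite derivnXn mulrnAr -exprD -scaler_nat scalerA.
  have [jk|jk] := leqP j k; first by rewrite subnKC.
  by rewrite ffact_small // !mulr0 !scale0r.
rewrite -scalerAr -exprD => /(congr1 (fun p : {poly R} => p`_(k + n * (r - s)))).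
rewrite !coefZ !coefXn addnC eqxx !mulr1; done.
Qed.

Lemma ffact_real (m s : nat) :
  (m ^_ s)%:R = \prod_(1 <= l < s.+1) (m%:R - l%:R + 1 : R).
Proof.
elim: s m => [|s IH] m; first by rewrite ffactn0 big_geq.
rewrite big_nat_recl // ffactnS natrM.
case: m => [|m]; first by rewrite !mul0r subrK mul0r.
rewrite IH /= subrK; congr (_ * _).
apply: eq_bigr => l _; rewrite -(addn1 l) -(addn1 m) !natrD; ring.
Qed.

End A.
Lemma rising_div (R : realType) (a d : R) n : d != 0 ->
  rising (a / d) n = d^-1 ^+ n * \prod_(i < n) (a + i%:R * d).
Proof.
move=> d0; rewrite /rising.
rewrite (eq_bigr (fun i : 'I_n => d^-1 * (a + i%:R * d))); last first.
  by move=> i _; field.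
by rewrite big_split /= prodr_const card_ord.
Qed.

Lemma bell_term_eq (R : realType) (r s n k : nat) : (s < r)%N ->
  bell_term (R:=R) r s n k = ((r - s)%:R ^+ (s * n))^-1 *
     ((\prod_(j < n) (k + j * (r - s)) ^_ s)%:R / k`!%:R).
Proof.
move=> sr; set d : R := (r - s)%:R.
have d0 : d != 0 by rewrite /d pnatr_eq0; lia.
rewrite /bell_term.
suff -> : \prod_(1 <= l < s.+1) rising ((k%:R - l%:R + 1) / (r - s)%:R) n =
  (d ^+ (s * n))^-1 * (\prod_(j < n) (k + j * (r - s)) ^_ s)%:R by ring.
rewrite (eq_bigr (fun l => d^-1 ^+ n * \prod_(i < n) (k%:R - l%:R + 1 + i%:R * d)));
  last by move=> l _; rewrite rising_div.
rewrite big_split /= prodr_const_nat subn1 /= -exprM mulnC exprVn; congr (_ * _).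
rewrite exchange_big natr_prod; apply: eq_bigr => i _.
rewrite ffact_real; apply: eq_bigr => l _.
by rewrite /d natrD natrM; ring.
Qed.
Definition gf (R : realType) (j : nat) : R ^nat := fun k => (k ^_ j)%:R / k`!%:R.

Lemma series_gf (R : realType) (j : nat) :
  (series (gf R j) @ \oo --> expR 1)%classic.
Proof.
rewrite -(cvg_shiftn j).
have -> : [sequence series (gf R j) (n + j)%N]_n = series (exp_coeff 1).
  apply/funext => N /=; rewrite series_addn.
  have -> : series (gf R j) j = 0.
    rewrite seriesEnat /=; apply: big1_seq => k /andP[_].
    rewrite mem_index_iota => /andP[_ kj].
    by rewrite /gf ffact_small // mul0r.
  rewrite add0r seriesEnat /= -{1}(add0n j) big_addn addnK.
  apply: eq_bigr => k _; rewrite /gf /exp_coeff /= expr1n.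
  rewrite -(ffact_fact (leq_addl k j)) addnK natrM invfM mulrA divff ?mul1r //.
  by rewrite pnatr_eq0 -lt0n ffact_gt0 leq_addl.
exact: is_cvg_series_exp_coeff.
Qed.

Lemma cvg_sum_seq (R : realType) (rr : seq nat) (F : nat -> R ^nat) (L : nat -> R) :
  (forall j, F j @ \oo --> L j)%classic ->
  ((fun N => \sum_(j <- rr) F j N) @ \oo --> \sum_(j <- rr) L j)%classic.
Proof.
move=> HF; elim: rr => [|j rr IH].
  rewrite big_nil; under eq_fun do rewrite big_nil; exact: cvg_cst.
rewrite big_cons; under eq_fun do rewrite big_cons.
exact: cvgD.
Qed.

Theorem theorem2 (R : realType) (r s n : nat) (S : nat -> nat -> R) :
  (s < r)%N -> (1 <= s)%N -> (1 <= n)%N -> is_rs_stirling r s S ->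
  cvgn (series (bell_term (R:=R) r s n)) /\
  rs_bell s S n =
    ((r - s)%:R ^+ (s * n) / expR 1) * limn (series (bell_term (R:=R) r s n)).
Proof.
move=> sr s1 n1 HS.
set c : R := (r - s)%:R ^+ (s * n).
have c0 : c != 0 by rewrite /c expf_neq0 // pnatr_eq0; lia.
have Hser : series (bell_term (R:=R) r s n) =
    (fun N => c^-1 * \sum_(j <- index_iota s (n * s).+1) S n j * series (gf R j) N).
  apply/funext => N; rewrite seriesEnat /=.
  under eq_bigr do rewrite bell_term_eq // (stirling_eq _ _ _ _ _ _ sr n1 HS).
  rewrite -mulr_sumr; congr (_ * _).
  rewrite (eq_bigr (fun i => \sum_(s <= j < (n*s).+1) S n j * (i^_j)%:R / i`!%:R)); last by move=> i _; rewrite mulr_suml.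
  rewrite exchange_big /=; apply: eq_bigr => j _.
  by rewrite seriesEnat /= mulr_sumr; apply: eq_bigr => k _; rewrite /gf mulrA.
have Hlim : (series (bell_term (R:=R) r s n) @ \oo -->
    c^-1 * \sum_(j <- index_iota s (n * s).+1) S n j * expR 1)%classic.
  rewrite Hser; apply: cvgMl_tmp; apply: cvg_sum_seq => j.
  apply: cvgMl_tmp; exact: series_gf.
split; first exact: cvgP Hlim.
rewrite (cvg_lim _ Hlim) // /rs_bell -mulr_suml.
have e0 : expR 1 != 0 :> R by rewrite gt_eqF // expR_gt0.
by field; apply/andP; split.
Qed.
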